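(* If $x_i$ is an optimal mechanism for agent $i$ (maximizing $\mathbb E[x_i(s)]$ subject to (P) and (IC)) with indirect utility $U_i(s_i)=\mathbb E[\omega x_i(s_i,s_{-i})\mid s_i]$, then $U_i(s_i)\ge 2s_i-1$ for every type $s_i$.
   Context: Setup. A state $\omega\in\{-1,+1\}$ is drawn with probability $1/2$ each. There are $n\ge2$ agents. Conditional on $\omega$, signals are i.i.d. with distribution $\mathbb F_\omega$ on $[0,1]$, normalized so that $s_i=\mathbb P[\omega=+1\mid s_i]$; $\mathbb F_{-1},\mathbb F_{+1}$ mutually absolutely continuous with densities; $\mathbb F=(\mathbb F_{-1}+\mathbb F_{+1})/2$ has density supported on a non-singleton interval with endpoints $\underline s<\overline s$ in $[0,1]$, differentiable with continuous derivative and $|f'/f|$ bounded. A mechanism for agent $i$ is measurable $x_i:[\underline s,\overline s]^n\to[0,1]$ (probability of receiving a good worth $\omega$, else $0$). (P): $\mathbb E[\omega x_i(s_i,s_{-i})\mid s_i]\ge0$; (IC): $\mathbb E[\omega x_i(s_i,s_{-i})\mid s_i]\ge\mathbb E[\omega x_i(\hat s_i,s_{-i})\mid s_i]$, for all $s_i,\hat s_i$ in the support. *)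

(* Defs.v *)
From mathcomp Require Import all_boot all_order all_algebra.
From mathcomp Require Import all_classical all_reals all_analysis.
Import numFieldNormedType.Exports.
Import Order.TTheory GRing.Theory Num.Theory.
Set Implicit Arguments.
Unset Strict Implicit.
Unset Printing Implicit Defensive.
Local Open Scope ring_scope.
Local Open Scope classical_set_scope.

(* Agents are indexed by 'I_n; a signal profile is an n.-tuple of
   reals (with the product Borel sigma-algebra from mathcomp-analysis).
   gp, gm : R -> R are the densities (w.r.t. Lebesgue measure) of
   F_{+1}, F_{-1}; F = (F_{-1}+F_{+1})/2 has density dens_f gp gm.
   The support of F is the interval [lo, hi]. *)

Section Model.
Variable R : realType.

Definition dens_f (gp gm : R -> R) (t : R) : R := (gp t + gm t) / 2.

Variable n : nat.

Definition upd (s : n.-tuple R) (j : 'I_n) (t : R) : n.-tuple R :=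
  [tuple if k == j then t else tnth s k | k < n].

(* For a jointly
   measurable bounded g this is (Tonelli) the integral against the product
   measure F_w^{|js|}. *)
Fixpoint iint (lo hi : R) (w : R -> R) (g : n.-tuple R -> R)
    (js : seq 'I_n) (s : n.-tuple R) : R :=
  match js with
  | [::] => g s
  | j :: js' =>
      Rintegral (@lebesgue_measure R) `[lo, hi]
        (fun t => w t * iint lo hi w g js' (upd s j t))
  end.

Definition others (i : 'I_n) : seq 'I_n := [seq j <- enum 'I_n | j != i].

(* E[ x(r, s_{-i}) | omega ] where s_{-i} ~ F_omega^{n-1}, w the density of
   F_omega *)
Definition condE (lo hi : R) (w : R -> R) (x : n.-tuple R -> R)
    (i : 'I_n) (r : R) : R :=
  iint lo hi w x (others i) [tuple r | k < n].

(* E[ omega * x_i(r, s_{-i}) | s_i = s ]: type s reporting r.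
   P[omega = +1 | s_i = s] = s by the normalization of signals, and
   conditionally on omega the s_{-i} are i.i.d. with density gp or gm. *)
Definition interim (lo hi : R) (gp gm : R -> R) (x : n.-tuple R -> R)
    (i : 'I_n) (s r : R) : R :=
  s * condE lo hi gp x i r - (1 - s) * condE lo hi gm x i r.

Definition indirect_utility lo hi gp gm x i (s : R) : R :=
  interim lo hi gp gm x i s s.

(* objective E[x_i(s)] = 1/2 E[x_i | omega=+1] + 1/2 E[x_i | omega=-1] *)
Definition objective (lo hi : R) (gp gm : R -> R) (x : n.-tuple R -> R) : R :=
  (iint lo hi gp x (enum 'I_n) [tuple 0 | k < n]
   + iint lo hi gm x (enum 'I_n) [tuple 0 | k < n]) / 2.

Definition mechanism (x : n.-tuple R -> R) : Prop :=
  measurable_fun [set: n.-tuple R] x /\ (forall s, 0 <= x s <= 1).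

Definition participation lo hi gp gm x i : Prop :=
  forall s, lo <= s <= hi -> 0 <= interim lo hi gp gm x i s s.

Definition incentive_compatible lo hi gp gm x i : Prop :=
  forall s s', lo <= s <= hi -> lo <= s' <= hi ->
    interim lo hi gp gm x i s s' <= interim lo hi gp gm x i s s.

Definition feasible lo hi gp gm x i : Prop :=
  [/\ mechanism x, participation lo hi gp gm x i
    & incentive_compatible lo hi gp gm x i].

Definition optimal lo hi gp gm x i : Prop :=
  feasible lo hi gp gm x i /\
  forall y, feasible lo hi gp gm y i ->
    objective lo hi gp gm y <= objective lo hi gp gm x.

End Model.

Definition signal_structure (R : realType) (lo hi : R) (gp gm : R -> R) : Prop :=
  [/\ 0 <= lo /\ lo < hi /\ hi <= 1,
      [/\ measurable_fun [set: R] gp, measurable_fun [set: R] gm,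
          (forall t, 0 <= gp t) /\ (forall t, 0 <= gm t),
          (\int[@lebesgue_measure R]_t (gp t)%:E = 1)%E
        & (\int[@lebesgue_measure R]_t (gm t)%:E = 1)%E],
      (forall A : set R, measurable A ->
         (\int[@lebesgue_measure R]_(t in A) (gp t)%:E = 0)%E <->
         (\int[@lebesgue_measure R]_(t in A) (gm t)%:E = 0)%E),
      (forall t, lo < t < hi -> 0 < dens_f gp gm t) /\
      (forall t, ~ (lo <= t <= hi) -> dens_f gp gm t = 0) /\
      (* normalization s = P[omega = +1 | s] (Bayes, prior 1/2) *)
      (forall t, lo <= t <= hi -> gp t = t * (gp t + gm t))
    &
      [/\ (forall t, lo < t < hi -> derivable (dens_f gp gm) t 1),
          {in `]lo, hi[, continuous (derive1 (dens_f gp gm))}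
        & exists M : R, forall t, lo < t < hi ->
            `|(derive1 (dens_f gp gm)) t / dens_f gp gm t| <= M]].

(* Main.v *)
Require Import Defs.
From mathcomp Require Import all_boot all_order all_algebra.
From mathcomp Require Import all_classical all_reals all_analysis.
From mathcomp Require Import measurable_realfun.
From mathcomp Require Import ring lra.
Import numFieldNormedType.Exports.
Import Order.TTheory GRing.Theory Num.Theory.
Local Open Scope ring_scope.
Local Open Scope classical_set_scope.

Section Eint.
Variables (R : realType) (n : nat) (lo hi : R) (w : R -> R).
Notation L := (@lebesgue_measure R).
Hypotheses (mw : measurable_fun setT w) (w0 : forall t, 0 <= w t)
  (w1 : (\int[L]_t (w t)%:E = 1)%E).

Fixpoint eint (g : n.-tuple R -> R) (js : seq 'I_n) (s : n.-tuple R) : \bar R :=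
  match js with
  | [::] => (g s)%:E
  | j :: js' => (\int[L]_t ((w t)%:E * eint g js' (upd s j t)))%E
  end.

Lemma tnth_upd (s : n.-tuple R) j t k :
  tnth (upd s j t) k = if k == j then t else tnth s k.
Proof. by rewrite /upd tnth_mktuple. Qed.

Lemma measurable_upd j :
  measurable_fun setT (fun p : n.-tuple R * R => upd p.1 j p.2).
Proof.
apply/measurable_fun_tnthP => k /=.
rewrite (_ : _ \o _ = fun p : n.-tuple R * R => if k == j then p.2 else tnth p.1 k);
  last by apply: funext => p /=; rewrite tnth_upd.
case: (k == j); first exact: measurable_snd.
exact: measurableT_comp (measurable_tnth k) measurable_fst.
Qed.

Lemma measurable_upd1 (s : n.-tuple R) j : measurable_fun setT (fun t : R => upd s j t).
Proof.
exact: measurableT_comp (measurable_upd j) (pair1_measurable s).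
Qed.

Lemma eint_props (g : n.-tuple R -> R) (mg : measurable_fun setT g) (g01 : forall s, 0 <= g s <= 1) js :
  measurable_fun [set: n.-tuple R] (eint g js) /\ forall s, (0 <= eint g js s <= 1)%E.
Proof.
elim: js => [|j js [IHm IHb]] /=.
  split; first exact/measurable_EFinP.
  by move=> s; rewrite !lee_fin; exact: g01.
have mf : measurable_fun setT
    (fun p : n.-tuple R * R => ((w p.2)%:E * eint g js (upd p.1 j p.2))%E).
  apply: emeasurable_funM.
    apply/measurable_EFinP; exact: (measurableT_comp mw measurable_snd).
  exact: measurableT_comp IHm (measurable_upd j).
have f0 : forall p : n.-tuple R * R, (0 <= (w p.2)%:E * eint g js (upd p.1 j p.2))%E.
  move=> p; apply: mule_ge0; first by rewrite lee_fin.
  by case/andP: (IHb (upd p.1 j p.2)).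
split.
  exact: (measurable_fun_fubini_tonelli_F (m2 := L) _ mf f0).
move=> s; apply/andP; split.
  by apply: integral_ge0 => t _; exact: (f0 (s, t)).
rewrite -w1; apply: ge0_le_integral => //.
- by move=> t _; exact: (f0 (s, t)).
- exact: measurableT_comp mf (pair1_measurable s).
- exact/measurable_EFinP.
- move=> t _; case/andP: (IHb (upd s j t)) => _ h.
  by rewrite (le_trans (lee_wpmul2l _ h)) ?mule1 // lee_fin.
Qed.

Lemma upd_comm (s : n.-tuple R) j k t u : j != k ->
  upd (upd s j t) k u = upd (upd s k u) j t.
Proof.
move=> jk; apply: eq_from_tnth => l; rewrite !tnth_upd.
case: (eqVneq l j) => [->|lj]; first by rewrite (negbTE jk).
by case: (l == k).
Qed.

Section Swap.
Variables (g : n.-tuple R -> R) (mg : measurable_fun [set: n.-tuple R] g)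
  (g01 : forall s, 0 <= g s <= 1).

Lemma eint_meas js : measurable_fun [set: n.-tuple R] (eint g js).
Proof. by case: (eint_props g mg g01 js). Qed.

Lemma eint_bnd js s : (0 <= eint g js s <= 1)%E.
Proof. by case: (eint_props g mg g01 js) => _; apply. Qed.

Lemma eint_ge0 js s : (0 <= eint g js s)%E.
Proof. by case/andP: (eint_bnd js s). Qed.

Lemma mulwZ (t : R) (h : R -> \bar R) : measurable_fun setT h ->
  (forall u, 0 <= h u)%E ->
  ((w t)%:E * \int[L]_u h u = \int[L]_u ((w t)%:E * h u))%E.
Proof.
move=> mh h0; rewrite ge0_integralZl //; last by rewrite lee_fin.
Qed.

Lemma eint_swap j k js s : j != k ->
  eint g [:: j, k & js] s = eint g [:: k, j & js] s.
Proof.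
move=> jk /=.
pose H := fun p : R * R =>
  ((w p.1)%:E * ((w p.2)%:E * eint g js (upd (upd s j p.1) k p.2)))%E.
have mE : measurable_fun [set: R * R]
    (fun p : R * R => eint g js (upd (upd s j p.1) k p.2)).
  have mu : measurable_fun [set: R * R] (fun p : R * R => upd (upd s j p.1) k p.2).
    apply: (measurableT_comp (measurable_upd k) (g := fun p : R * R => (upd s j p.1, p.2))).
    apply: measurable_fun_pair => //.
    exact: measurableT_comp (measurable_upd1 s j) measurable_fst.
  exact: (measurableT_comp (eint_meas js) mu).
have mH : measurable_fun setT H.
  apply: emeasurable_funM.
    apply/measurable_EFinP; exact: (measurableT_comp mw measurable_fst).
  apply: emeasurable_funM => //.
  apply/measurable_EFinP; exact: (measurableT_comp mw measurable_snd).
have H0 : forall p, (0 <= H p)%E.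
  by move=> p; rewrite /H; apply: mule_ge0; [rewrite lee_fin|
    apply: mule_ge0; [rewrite lee_fin|exact: eint_ge0]].
transitivity (\int[L]_t \int[L]_u H (t, u))%E.
  apply: eq_integral => t _; rewrite /H /= mulwZ //.
  - apply: emeasurable_funM.
      exact/measurable_EFinP.
    exact: measurableT_comp (eint_meas js) (measurable_upd1 _ k).
  - by move=> u; apply: mule_ge0; [rewrite lee_fin|exact: eint_ge0].
rewrite (@fubini_tonelli _ _ _ _ _ L L H mH H0).
apply: eq_integral => u _; rewrite mulwZ //.
- apply: eq_integral => t _; rewrite /H /= upd_comm //.
  by rewrite muleCA.
- apply: emeasurable_funM.
    exact/measurable_EFinP.
  exact: measurableT_comp (eint_meas js) (measurable_upd1 _ j).
- by move=> t; apply: mule_ge0; [rewrite lee_fin|exact: eint_ge0].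
Qed.
End Swap.

Lemma eint_cat (g : n.-tuple R -> R) (mg : measurable_fun [set: n.-tuple R] g)
  (g01 : forall s, 0 <= g s <= 1) i js1 js2 s : i \notin js1 ->
  eint g (js1 ++ i :: js2) s = eint g (i :: js1 ++ js2) s.
Proof.
elim: js1 s => [//|j js1 IH] s /=; rewrite inE negb_or => /andP[ij ijs].
transitivity (eint g [:: j, i & js1 ++ js2] s).
  by rewrite /=; apply: eq_integral => t _; rewrite IH.
by rewrite eint_swap // eq_sym.
Qed.

Lemma eint_dep (g : n.-tuple R -> R) js s s' :
  (forall k, k \notin js -> tnth s k = tnth s' k) -> eint g js s = eint g js s'.
Proof.
elim: js s s' => [|j js IH] s s' H /=.
  by congr (_%:E); congr g; apply: eq_from_tnth => k; apply: H.
apply: eq_integral => t _; congr (_ * _)%E; apply: IH => k kjs.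
rewrite !tnth_upd; case: eqP => // /eqP kj; apply: H.
by rewrite inE negb_or kj.
Qed.

Lemma eint_slice (g h : n.-tuple R -> R) (i : 'I_n) (c : R) js s :
  (forall s, tnth s i = c -> g s = h s) -> i \notin js -> tnth s i = c ->
  eint g js s = eint h js s.
Proof.
move=> gh; elim: js s => [|j js IH] s /=.
  by move=> _ sc; rewrite gh.
rewrite inE negb_or => /andP[ij ijs] sc.
apply: eq_integral => t _; congr (_ * _)%E; apply: IH => //.
by rewrite tnth_upd (negbTE ij).
Qed.

Lemma eint_const1 js s : eint (fun _ => 1) js s = 1%E.
Proof.
elim: js s => [//|j js IH] s /=.
rewrite -w1; apply: eq_integral => t _; by rewrite IH mule1.
Qed.

Lemma filter_neq (i : 'I_n) (p : seq 'I_n) : i \notin p -> [seq j <- p | j != i] = p.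
Proof.
elim: p => [//|j p IH] /=; rewrite inE negb_or => /andP[ij ip].
by rewrite eq_sym ij IH.
Qed.

Lemma eint_enum (g : n.-tuple R -> R) (mg : measurable_fun [set: n.-tuple R] g)
  (g01 : forall s, 0 <= g s <= 1) (i : 'I_n) s :
  eint g (enum 'I_n) s = eint g (i :: others i) s.
Proof.
rewrite /others; have ue := enum_uniq 'I_n.
have ie : i \in enum 'I_n by rewrite mem_enum.
move: ue; case/splitPr: ie => p1 p2.
rewrite cat_uniq /= negb_or => /and4P[_ /andP[ip1 _] ip2 _].
rewrite eint_cat // filter_cat /= eqxx /= !filter_neq //.
Qed.
End Eint.
Arguments eint {R n}.

Section IintE.
Variables (R : realType) (n : nat) (lo hi : R) (w : R -> R).
Notation L := (@lebesgue_measure R).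
Hypotheses (mw : measurable_fun setT w) (w0 : forall t, 0 <= w t)
  (w1 : (\int[L]_t (w t)%:E = 1)%E)
  (wout : forall t, ~ (lo <= t <= hi) -> w t = 0).

Lemma fin01 (e : \bar R) : (0 <= e <= 1)%E -> e \is a fin_num.
Proof.
case/andP => e0 e1; rewrite ge0_fin_numE //; exact: (le_lt_trans e1 (ltry 1)).
Qed.

Lemma iint_eint (g : n.-tuple R -> R) (mg : measurable_fun [set: n.-tuple R] g)
  (g01 : forall s, 0 <= g s <= 1) js s :
  iint lo hi w g js s = fine (eint w g js s).
Proof.
elim: js s => [//|j js IH] s /=.
rewrite /Rintegral; congr fine; rewrite integral_mkcond; apply: eq_integral => t _.
rewrite /patch; case: ifPn => tin.
  rewrite IH EFinM fineK //; apply: fin01; exact: (eint_bnd _ _ w mw w0 w1 g mg g01).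
rewrite wout ?mul0e //; move=> /andP ht; move/negP: tin; apply.
by rewrite inE /= in_itv /=; apply/andP.
Qed.
End IintE.
Arguments eint_props {R n w}.
Arguments eint_meas {R n w} mw w0 w1 {g}.
Arguments eint_bnd {R n w} mw w0 w1 {g}.
Arguments eint_ge0 {R n w} mw w0 w1 {g}.
Arguments eint_cat {R n w} mw w0 w1 {g}.
Arguments eint_dep {R n w g}.
Arguments eint_slice {R n w g h}.
Arguments eint_const1 {R n w} w1.
Arguments eint_enum {R n w} mw w0 w1 {g}.
Arguments iint_eint {R n lo hi w} mw w0 w1 wout {g}.


Lemma pos_int (R : realType) (f : R -> R) (a b : R) : measurable_fun setT f ->
  a < b -> (forall t, a < t < b -> 0 < f t) ->
  (0 < \int[@lebesgue_measure R]_(t in `]a, b[) (f t)%:E)%E.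
Proof.
move=> mf ab fp.
have mD : measurable (`]a, b[ : set R) by exact: measurable_itv.
have f0 : forall t, `]a, b[ t -> (0 <= (f t)%:E)%E.
  move=> t; rewrite /= in_itv /= => /fp ft; rewrite lee_fin; exact: ltW.
rewrite lt_def integral_ge0 // andbT; apply/eqP => H.
have : ae_eq (@lebesgue_measure R) `]a, b[ (fun t => (f t)%:E) (cst 0%E).
  have mfE : measurable_fun `]a, b[ (fun t => (f t)%:E).
    by apply/measurable_EFinP; exact: measurable_funS mf.
  apply/(ae_eq_integral_abs (@lebesgue_measure R) mD mfE).
  rewrite -H; apply: eq_integral => t tin; rewrite gee0_abs //.
  by apply: f0; rewrite inE in tin.
case => N [mN N0 sub].
have sN : `]a, b[ `<=` N.
  move=> t tin; apply: sub => /= /(_ tin) [] ft.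
  by move: (f0 t tin); have := fp t; rewrite /= in_itv /= in tin => /(_ tin); rewrite ft ltxx.
have N0' : (@lebesgue_measure R N = 0)%E by exact: N0.
have HH : (@lebesgue_measure R `]a, b[ <= @lebesgue_measure R N)%E.
  exact: (le_measure (@lebesgue_measure R) (mem_set mD) (mem_set mN) sN).
move: HH; rewrite N0' lebesgue_measure_itv /= lte_fin ab -EFinD lee_fin.
by move=> h; move: ab; rewrite -subr_gt0 => /(lt_le_trans)/(_ h); rewrite ltxx.
Qed.
Arguments pos_int {R} f {a b}.


Section Cw.
Variables (R : realType) (n : nat) (lo hi : R) (w : R -> R) (i : 'I_n)
  (g : n.-tuple R -> R).
Notation L := (@lebesgue_measure R).
Hypotheses (mw : measurable_fun setT w) (w0 : forall t, 0 <= w t)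
  (w1 : (\int[L]_t (w t)%:E = 1)%E)
  (wout : forall t, ~ (lo <= t <= hi) -> w t = 0)
  (mg : measurable_fun [set: n.-tuple R] g) (g01 : forall s, 0 <= g s <= 1).

Lemma C_eint t : (condE lo hi w g i t)%:E = eint w g (others i) [tuple t | k < n].
Proof.
rewrite /condE (iint_eint mw w0 w1 wout mg g01) fineK //.
by apply: fin01; exact: (eint_bnd mw w0 w1 mg g01).
Qed.

Lemma C01 t : 0 <= condE lo hi w g i t <= 1.
Proof. by rewrite -!lee_fin C_eint; exact: (eint_bnd mw w0 w1 mg g01). Qed.

Lemma mtuple : measurable_fun [set: R] (fun t : R => [tuple t | k < n]).
Proof.
apply/measurable_fun_tnthP => k.
rewrite (_ : _ \o _ = id) //; apply: funext => t /=; by rewrite tnth_mktuple.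
Qed.

Lemma C_meas : measurable_fun [set: R] (condE lo hi w g i).
Proof.
apply/measurable_EFinP.
rewrite (_ : EFin \o _ = fun t => eint w g (others i) [tuple t | k < n]).
  exact: (measurableT_comp (eint_meas mw w0 w1 mg g01 _) mtuple).
by apply: funext => t /=; rewrite C_eint.
Qed.

Lemma obj_part z : iint lo hi w g (enum 'I_n) z =
  fine (\int[L]_t (w t * condE lo hi w g i t)%:E).
Proof.
rewrite (iint_eint mw w0 w1 wout mg g01) (eint_enum mw w0 w1 mg g01 i) /=.
congr fine; apply: eq_integral => t _; rewrite EFinM C_eint; congr (_ * _)%E.
apply: eint_dep => k; rewrite mem_filter mem_enum andbT negbK => /eqP ->.
by rewrite tnth_upd eqxx tnth_mktuple.
Qed.

Lemma obj_bnd : (0 <= \int[L]_t (w t * condE lo hi w g i t)%:E <= 1)%E.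
Proof.
have h t : 0 <= w t * condE lo hi w g i t.
  by apply: mulr_ge0 => //; case/andP: (C01 t).
apply/andP; split; first by apply: integral_ge0 => t _; rewrite lee_fin.
rewrite -w1; apply: ge0_le_integral => //.
- by move=> t _; rewrite lee_fin.
- by apply/measurable_EFinP; apply: measurable_funM => //; exact: C_meas.
- exact/measurable_EFinP.
- move=> t _; rewrite lee_fin -[leRHS]mulr1; apply: ler_wpM2l => //.
  by case/andP: (C01 t).
Qed.
End Cw.
Arguments C_eint {R n lo hi w i g}.
Arguments C01 {R n lo hi w i g}.
Arguments C_meas {R n lo hi w i g}.
Arguments obj_part {R n lo hi w i g}.
Arguments obj_bnd {R n lo hi w i g}.


Theorem lemmaA3 (R : realType) (n : nat) (hn : (2 <= n)%N) (i : 'I_n)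
    (lo hi : R) (gp gm : R -> R)
    (hsig : signal_structure lo hi gp gm)
    (x : n.-tuple R -> R)
    (hopt : optimal lo hi gp gm x i) :
  forall s : R, lo <= s <= hi ->
    2 * s - 1 <= indirect_utility lo hi gp gm x i s.
Proof.
case: hsig => [[lo0 [lohi hi1]] [mgp mgm [gp0 gm0] gp1 gm1] _ [fpos [fout norm]] _].
case: hopt => [[[mx x01] Px ICx] opt].
have gout t : ~ (lo <= t <= hi) -> gp t = 0 /\ gm t = 0.
  move=> /fout; rewrite /dens_f => h.
  have := gp0 t; have := gm0 t; move: h; lra.
have gpout t : ~ (lo <= t <= hi) -> gp t = 0 by move=> /gout[].
have gmout t : ~ (lo <= t <= hi) -> gm t = 0 by move=> /gout[].
set A := condE lo hi gp x i.
set B := condE lo hi gm x i.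
have A01 t : 0 <= A t <= 1 by exact: (C01 (i:=i) mgp gp0 gp1 gpout mx x01).
have B01 t : 0 <= B t <= 1 by exact: (C01 (i:=i) mgm gm0 gm1 gmout mx x01).
set U := fun t => t * A t - (1 - t) * B t.
have ICx' s r : lo <= s <= hi -> lo <= r <= hi -> s * A r - (1 - s) * B r <= U s.
  by move=> hs hr; exact: (ICx s r hs hr).
have U0 s : lo <= s <= hi -> 0 <= U s by move=> hs; exact: (Px s hs).
move=> s0 hs0; rewrite leNgt; apply/negP => hlt.
have {}hlt : U s0 < 2 * s0 - 1 by exact: hlt.
pose S := [set t | lo <= t <= hi /\ U t < 2 * t - 1].
have conv : is_interval S.
  move=> a b [ha Ua] [hb Ub] t /andP[ha_t tb]; split.
    by case/andP: ha => ha _; case/andP: hb => _ hb; apply/andP; split;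
      [exact: le_trans ha_t| exact: le_trans hb].
  have htin : lo <= t <= hi.
    by case/andP: ha => ha _; case/andP: hb => _ hb; apply/andP; split;
      [exact: le_trans ha_t| exact: le_trans hb].
  have h1 := ICx' a t ha htin.
  have h2 := ICx' b t hb htin.
  case: (eqVneq t b) => [->//|tb'].
  have tb2 : t < b by rewrite lt_neqAle tb' tb.
  have p1 : (b - t) * (a * A t - (1 - a) * B t) < (b - t) * (2 * a - 1).
    rewrite ltr_pM2l ?subr_gt0 //; exact: le_lt_trans h1 Ua.
  have p2 : (t - a) * (b * A t - (1 - b) * B t) <= (t - a) * (2 * b - 1).
    rewrite ler_wpM2l ?subr_ge0 //; exact: le_trans h2 (ltW Ub).
  have : (b - a) * U t < (b - a) * (2 * t - 1).
    rewrite /U; move: p1 p2; set At := A t; set Bt := B t => p1 p2.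
    have e1 : (b - a) * (t * At - (1 - t) * Bt) =
      (b - t) * (a * At - (1 - a) * Bt) + (t - a) * (b * At - (1 - b) * Bt).
      by ring.
    have e2 : (b - a) * (2 * t - 1) = (b - t) * (2 * a - 1) + (t - a) * (2 * b - 1).
      by ring.
    rewrite e1 e2; exact: ltr_leD.
  rewrite ltr_pM2l // subr_gt0; exact: le_lt_trans ha_t tb2.
have mS : measurable S := is_interval_measurable conv.
have mb : measurable_fun [set: R] (fun t : R => t \in S).
  apply: (measurable_fun_bool true); rewrite setTI.
  rewrite (_ : _ @^-1` _ = S) //; apply/seteqP; split => t /=.
    by move/set_mem.
  by move=> St; apply/mem_set.
pose y := fun s : n.-tuple R => if tnth s i \in S then 1 else x s.
have my : measurable_fun [set: n.-tuple R] y.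
  apply: measurable_fun_ifT => //.
  exact: (measurableT_comp mb (measurable_tnth i)).
have y01 s : 0 <= y s <= 1.
  by rewrite /y; case: ifPn => _ //; rewrite ler01 lexx.
have noti : i \notin others i by rewrite mem_filter eqxx.
have Cy : forall w : R -> R, measurable_fun setT w -> (forall t, 0 <= w t) ->
    (\int[@lebesgue_measure R]_t (w t)%:E = 1)%E ->
    (forall t, ~ (lo <= t <= hi) -> w t = 0) ->
    forall t, condE lo hi w y i t = if t \in S then 1 else condE lo hi w x i t.
  move=> w mw w0 w1 wout t.
  apply: EFin_inj; rewrite (C_eint mw w0 w1 wout my y01); case: ifPn => tS.
    rewrite (eint_slice (h := fun _ => 1) i t) ?(eint_const1 w1) //.
      by move=> s' st; rewrite /y st tS.
    by rewrite tnth_mktuple.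
  rewrite (C_eint mw w0 w1 wout mx x01); apply: (eint_slice i t) => //.
    by move=> s' st; rewrite /y st (negbTE tS).
  by rewrite tnth_mktuple.
have Iy s r : interim lo hi gp gm y i s r =
    if r \in S then 2 * s - 1 else s * A r - (1 - s) * B r.
  rewrite /interim (Cy gp mgp gp0 gp1 gpout) (Cy gm mgm gm0 gm1 gmout).
  by case: ifPn => _ //; ring.
have feas : feasible lo hi gp gm y i.
  split; first by split.
  - move=> s hs; rewrite Iy; case: ifPn => sS.
      move/set_mem: sS => [_ h]; have := U0 s hs; lra.
    exact: Px s hs.
  - move=> s r hs hr; rewrite !Iy.
    case: ifPn => rS; case: ifPn => sS.
    + exact: lexx.
    + rewrite leNgt; apply/negP => h; move/negP: sS; apply; apply/mem_set; split => //.
    + move/set_mem: sS => [_ h]; exact: le_trans (ICx' s r hs hr) (ltW h).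
    + exact: ICx' s r hs hr.
have hopt := opt y feas.
move: hopt; rewrite /objective.
rewrite (obj_part (i:=i) mgp gp0 gp1 gpout my y01) (obj_part (i:=i) mgm gm0 gm1 gmout my y01).
rewrite (obj_part (i:=i) mgp gp0 gp1 gpout mx x01) (obj_part (i:=i) mgm gm0 gm1 gmout mx x01).
have dec : forall w : R -> R, measurable_fun setT w -> (forall t, 0 <= w t) ->
    (\int[@lebesgue_measure R]_t (w t)%:E = 1)%E ->
    (forall t, ~ (lo <= t <= hi) -> w t = 0) ->
    (\int[@lebesgue_measure R]_t (w t * condE lo hi w y i t)%:E =
     \int[@lebesgue_measure R]_t (w t * condE lo hi w x i t)%:E +
     \int[@lebesgue_measure R]_t
        (w t * (if t \in S then 1 - condE lo hi w x i t else 0))%:E)%E.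
  move=> w mw w0 w1 wout.
  have Cx01 := C01 (i:=i) mw w0 w1 wout mx x01.
  have mC := C_meas (i:=i) mw w0 w1 wout mx x01.
  rewrite -ge0_integralD //.
  - apply: eq_integral => t _; rewrite (Cy w mw w0 w1 wout) -EFinD; congr EFin.
    by case: ifPn => _; ring.
  - move=> t _; rewrite lee_fin; apply: mulr_ge0 => //; by case/andP: (Cx01 t).
  - by apply/measurable_EFinP; exact: measurable_funM.
  - move=> t _; rewrite lee_fin; apply: mulr_ge0 => //; case: ifPn => _ //.
    by rewrite subr_ge0; case/andP: (Cx01 t).
  - apply/measurable_EFinP; apply: measurable_funM => //.
    apply: measurable_fun_ifT => //; apply: measurable_funB => //.
rewrite (dec gp mgp gp0 gp1 gpout) (dec gm mgm gm0 gm1 gmout).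
have bpx := obj_bnd (i:=i) mgp gp0 gp1 gpout mx x01.
have bpy := obj_bnd (i:=i) mgp gp0 gp1 gpout my y01.
have bmx := obj_bnd (i:=i) mgm gm0 gm1 gmout mx x01.
have bmy := obj_bnd (i:=i) mgm gm0 gm1 gmout my y01.
rewrite (dec gp mgp gp0 gp1 gpout) in bpy.
rewrite (dec gm mgm gm0 gm1 gmout) in bmy.
rewrite -/A -/B in bpx bpy bmx bmy *.
set Ip := (\int[@lebesgue_measure R]_t (gp t * A t)%:E)%E in bpx bpy *.
set Im := (\int[@lebesgue_measure R]_t (gm t * B t)%:E)%E in bmx bmy *.
set Dp := (\int[@lebesgue_measure R]_t (gp t * (if t \in S then 1 - A t else 0))%:E)%E in bpy *.
set Dm := (\int[@lebesgue_measure R]_t (gm t * (if t \in S then 1 - B t else 0))%:E)%E in bmy *.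
have Dm0 : (0 <= Dm)%E.
  apply: integral_ge0 => t _; rewrite lee_fin; apply: mulr_ge0 => //.
  by case: ifPn => _ //; rewrite subr_ge0; case/andP: (B01 t).
have Dp0 : (0 < Dp)%E.
  have /andP[los0 s0hi] := hs0.
  pose d0 := 2 * s0 - 1 - U s0.
  have d0p : 0 < d0 by rewrite /d0; lra.
  have [a [loa sa ahi]] : exists a, [/\ lo <= a, s0 - d0 / 4 <= a & a < hi].
    case: (leP lo (s0 - d0 / 4)) => h.
      by exists (s0 - d0 / 4); split => //; lra.
    by exists lo; split => //; lra.
  have key t : a < t < hi -> S t /\ d0 / 2 <= 1 - A t.
    case/andP => ha_t th.
    have tin : lo <= t <= hi by apply/andP; split; lra.
    have h1 := ICx' s0 t hs0 tin.
    case/andP: (A01 t) => A0 A1; case/andP: (B01 t) => B0 B1.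
    have t1 : t <= 1 by lra.
    have R1 : 0 <= (1 - t) * (1 - B t) by apply: mulr_ge0; lra.
    have R2 : 0 <= (1 - t) * (1 - A t) by apply: mulr_ge0; lra.
    have hU : d0 / 2 <= 2 * t - 1 - U t.
      rewrite /d0 /U /= in h1 d0p sa *.
      case: (leP s0 t) => ts.
        have P : 0 <= (t - s0) * (2 - A t - B t) by apply: mulr_ge0; lra.
        nra.
      have Q : 0 <= (s0 - t) * (A t + B t) by apply: mulr_ge0; lra.
      nra.
    split; first by split => //; lra.
    rewrite /U /= in hU; nra.
  have mite : measurable_fun [set: R]
      (fun t => gp t * (if t \in S then 1 - A t else 0)).
    apply: measurable_funM => //; apply: measurable_fun_ifT => //.
    apply: measurable_funB => //; exact: (C_meas (i:=i) mgp gp0 gp1 gpout mx x01).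
  have ite0 t : 0 <= gp t * (if t \in S then 1 - A t else 0).
    apply: mulr_ge0 => //; case: ifPn => _ //.
    by rewrite subr_ge0; case/andP: (A01 t).
  have mI : measurable (`]a, hi[ : set R) by exact: measurable_itv.
  have hsub : (\int[@lebesgue_measure R]_(t in `]a, hi[)
      (gp t * (if t \in S then 1 - A t else 0))%:E <= Dp)%E.
    apply: ge0_subset_integral => //.
    - by apply/measurable_EFinP.
    - by move=> t _; rewrite lee_fin.
  apply: lt_le_trans hsub.
  have mf' : measurable_fun [set: R] (fun t => gp t * (d0 / 2)).
    by apply: measurable_funM => //.
  have fp' : forall t, a < t < hi -> 0 < gp t * (d0 / 2).
    move=> t /[dup] ht /key [[tin Ut] _].
    apply: mulr_gt0; last lra.
    case/andP: ht => ha_t th.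
    have tin' : lo <= t <= hi by exact: tin.
    rewrite (norm t tin'); apply: mulr_gt0.
      have := U0 t tin'; lra.
    have ltt : lo < t < hi by apply/andP; split; lra.
    have := fpos t ltt; rewrite /dens_f; lra.
  have hpos := pos_int (fun t => gp t * (d0 / 2)) mf' ahi fp'.
  apply: (lt_le_trans hpos).
  apply: ge0_le_integral => //.
  - move=> t; rewrite /= in_itv /= => /key [_ _].
    rewrite lee_fin; apply: mulr_ge0 => //; lra.
  - apply/measurable_EFinP; exact: measurable_funTS.
  - apply/measurable_EFinP; exact: measurable_funTS.
  - move=> t; rewrite /= in_itv /= => /key [St hA].
    rewrite lee_fin (mem_set St); apply: ler_wpM2l => //.
move=> h.
have f1 : fine Ip < fine (Ip + Dp).
  apply: fine_lt; [exact: fin01 bpx | exact: fin01 bpy |].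
  by rewrite lteDl // fin01.
have f2 : fine Im <= fine (Im + Dm).
  apply: fine_le; [exact: fin01 bmx | exact: fin01 bmy |].
  exact: leeDl.
move: h; lra.
Qed.
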